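(* Let $\mathbb{F}$ be a field of characteristic zero, let $J\ge0$ be an integer and $r,i$ integers with $r\ge2$, $1\le i\le r$. Define elements $N^J_{i,j,(r-1)d+j}\in\mathbb{F}[[q]]$ for integers $d\ge J+1$ and $1\le j\le r$ (indexed by the pair $(j,d)$) by the initial conditions $$N^J_{i,j,(r-1)(J+1)+j}=\begin{cases} q^{2(J+1)j-1}+q^{2(J+1)(j-1)} & 1\le j\le i-1,\\ q^{2(J+1)(j-1)} & j=i,\\ 0 & i+1\le j\le r,\end{cases}$$ and, for $d\ge J+1$ and $1\le j\le r$, the recursion $$N^J_{i,j,(r-1)(d+1)+j}=q^{2(d+1)(j-1)}\sum_{m=1}^{r-j+1}N^J_{i,m,(r-1)d+m}+q^{2(d+1)j-1}\sum_{m=1}^{r-j}N^J_{i,m,(r-1)d+m}.$$ Then for every integer $d\ge J+1$, $$\mathrm{HP}^{2J+1}_i=\sum_{j=1}^{r}N^J_{i,j,(r-1)d+j}\,\mathrm{HP}^{2d+1}_{r-j+1}.$$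
   Context: For $k\ge1$ let $S_k=\mathbb{F}[x_k,x_{k+1},x_{k+2},\ldots]$, graded by weight: the monomial $x_{i_1}^{\alpha_1}\cdots x_{i_m}^{\alpha_m}$ has weight $\sum_t i_t\alpha_t$. Fix $r\ge2$. For $k\ge1$, let $L_k$ be the ideal of $S_k$ generated by the monomials $x_{2a-1}^2$ ($2a-1\ge k$), $x_{2b-1}x_{2b}^{r-1}$ ($2b-1\ge k$), $x_{2c}^{r-n_1}x_{2c+2}^{n_1}$ ($2c\ge k$, $0\le n_1\le r-1$), and $x_{2c}^{r-n_2-1}x_{2c+1}x_{2c+2}^{n_2}$ ($2c\ge k$, $0\le n_2\le r-2$), where $a,b,c$ range over integers. For $1\le \ell\le r$ define the ideal $L_k^{\ell}$ of $S_k$ as follows: if $k$ is even, $L_k^\ell$ is generated by $x_k^{\ell}$, the monomials $x_k^{\ell-t}x_{k+2}^{r-\ell+t}$ and $x_k^{\ell-t}x_{k+1}x_{k+2}^{r-\ell+t-1}$ for $t=1,\ldots,\ell-1$, and the generators of $L_{k+1}$; if $k$ is odd, $L_k^\ell$ is generated by $x_k^2$, $x_kx_{k+1}^{\ell-1}$, and the generators of $L_{k+1}^{\ell}$. For a graded algebra $A=\bigoplus_{j\ge0}A_j$ with finite-dimensional components, its Hilbert–Poincaré series is $\sum_{j\ge0}\dim_{\mathbb{F}}(A_j)q^j$. Write $\mathrm{HP}^k_\ell$ for the Hilbert–Poincaré series of $S_k/L_k^\ell$ (a formal power series in $q$). *)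

(* Defs.v *)
From mathcomp Require Import all_boot all_order all_algebra.
Set Implicit Arguments. Unset Strict Implicit. Unset Printing Implicit Defensive.
Import GRing.Theory.
Local Open Scope ring_scope.

Definition qpow (R : nzRingType) (e : nat) : nat -> R := fun n => (n == e)%:R.
Definition smul (R : nzRingType) (f g : nat -> R) : nat -> R :=
  fun n => \sum_(a < n.+1) f a * g (n - a)%N.
Definition sadd (R : nzRingType) (f g : nat -> R) : nat -> R := fun n => f n + g n.
Definition szero (R : nzRingType) : nat -> R := fun _ => 0.

(* A monomial is an exponent function e : nat -> nat (e p = exponent of x_p).
   Divisibility by a generator = componentwise comparison of exponents.
   [inL r k N e] : e is divisible by some generator of L_k whose smallest
   variable index p is < N (every generator of L_k involves x_p, p its
   smallest index, with positive exponent, so for a monomial supported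
   on indices < N this is exactly membership in L_k). *)
Definition inL (r k N : nat) (e : nat -> nat) : bool :=
  has (fun p =>
    (k <= p)%N &&
    (if odd p then
        (* x_{2a-1}^2 ,  x_{2b-1} x_{2b}^{r-1} *)
        (2 <= e p)%N || ((1 <= e p) && (r - 1 <= e p.+1))%N
     else
        (* x_{2c}^{r-n1} x_{2c+2}^{n1}, 0 <= n1 <= r-1 *)
        has (fun n1 => (r - n1 <= e p) && (n1 <= e p.+2))%N (iota 0 r)
        (* x_{2c}^{r-n2-1} x_{2c+1} x_{2c+2}^{n2}, 0 <= n2 <= r-2 *)
     || has (fun n2 => [&& r - n2 - 1 <= e p, 1 <= e p.+1 & n2 <= e p.+2])%N
            (iota 0 (r - 1))))
    (iota 0 N).

(* generators of L_k^l for k even, other than those of L_{k+1} *)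
Definition inLl_even_extra (r l k : nat) (e : nat -> nat) : bool :=
  [|| (l <= e k)%N,
      has (fun t => (l - t <= e k) && (r - l + t <= e k.+2))%N (iota 1 (l - 1))
    | has (fun t => [&& l - t <= e k, 1 <= e k.+1 & r - l + t - 1 <= e k.+2])%N
          (iota 1 (l - 1))].

Definition inLl (r l k N : nat) (e : nat -> nat) : bool :=
  if odd k then
    [|| (2 <= e k)%N, ((1 <= e k) && (l - 1 <= e k.+1))%N,
        inLl_even_extra r l k.+1 e | inL r k.+2 N e]
  else inLl_even_extra r l k e || inL r k.+1 N e.

(* A monomial of weight j only involves x_1..x_j with exponents <= j:
   encode it as a finite function 'I_j.+1 -> 'I_j.+1 (index 0 unused). *)
Definition extexp (j : nat) (e : {ffun 'I_j.+1 -> 'I_j.+1}) : nat -> nat :=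
  fun p => match insub p with Some i => nat_of_ord (e i) | None => 0%N end.

(* monomials of S_k (variables x_k, x_{k+1}, ...) of weight j *)
Definition monoS (k j : nat) (e : {ffun 'I_j.+1 -> 'I_j.+1}) : bool :=
  [forall p : 'I_j.+1, ((p == 0 :> nat) || (p < k)%N) ==> (e p == 0 :> nat)]
  && ((\sum_(p < j.+1) p * e p)%N == j).

(* dim_F (S_k / L_k^l)_j = number of standard monomials (monomials of S_k of
   weight j not in the monomial ideal L_k^l). *)
Definition hpcoef (r l k j : nat) : nat :=
  #|[set e : {ffun 'I_j.+1 -> 'I_j.+1} | @monoS k j e && ~~ inLl r l k j.+1 (extexp e)]|.

Definition HP (R : nzRingType) (r k l : nat) : nat -> R := fun j => (hpcoef r l k j)%:R.

(* N^J_{i,j,(r-1)(J+1+s)+j}, i.e. d = J+1+s *)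
Fixpoint Nser (R : nzRingType) (r i J s : nat) (j : nat) {struct s} : nat -> R :=
  match s with
  | 0%N =>
      if (j < i)%N then sadd (qpow R (2 * J.+1 * j - 1)) (qpow R (2 * J.+1 * (j - 1)))
      else if j == i then qpow R (2 * J.+1 * (j - 1))
      else szero R
  | s'.+1 =>
      let d := (J.+1 + s')%N in
      sadd
        (smul (qpow R (2 * d.+1 * (j - 1)))
              (fun n => \sum_(1 <= m < (r - j + 1).+1) Nser R r i J s' m n))
        (smul (qpow R (2 * d.+1 * j - 1))
              (fun n => \sum_(1 <= m < (r - j).+1) Nser R r i J s' m n))
  end.

Definition NJ (R : nzRingType) (r i J d j : nat) : nat -> R := Nser R r i J (d - J.+1) j.

(* Main.v *)
Require Import Defs.
From mathcomp Require Import all_boot all_order all_algebra.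
From mathcomp Require Import zify.
From Stdlib Require Import FunctionalExtensionality.
Import GRing.Theory.
Set Implicit Arguments. Unset Strict Implicit. Unset Printing Implicit Defensive.

Definition Gv (r p u v w : nat) : bool :=
  if odd p then (2 <= u) || ((1 <= u) && (r - 1 <= v))
  else has (fun n1 => (r - n1 <= u) && (n1 <= w)) (iota 0 r)
     || has (fun n2 => [&& r - n2 - 1 <= u, 1 <= v & n2 <= w]) (iota 0 (r - 1)).

Definition Ev (r l u v w : nat) : bool :=
  [|| l <= u,
      has (fun t => (l - t <= u) && (r - l + t <= w)) (iota 1 (l - 1))
    | has (fun t => [&& l - t <= u, 1 <= v & r - l + t - 1 <= w]) (iota 1 (l - 1))].

Definition Ge (r u v w : nat) : bool :=
  has (fun n1 => (r - n1 <= u) && (n1 <= w)) (iota 0 r)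
  || has (fun n2 => [&& r - n2 - 1 <= u, 1 <= v & n2 <= w]) (iota 0 (r - 1)).

Lemma inL_E r k N e : inL r k N e = has (fun p => (k <= p) && Gv r p (e p) (e p.+1) (e p.+2)) (iota 0 N).
Proof. by []. Qed.

Lemma extra_E r l k e : inLl_even_extra r l k e = Ev r l (e k) (e k.+1) (e k.+2).
Proof. by []. Qed.

Lemma Gv_odd r p u v w : odd p -> Gv r p u v w = (2 <= u) || ((1 <= u) && (r - 1 <= v)).
Proof. by rewrite /Gv => ->. Qed.
Lemma Gv_even r p u v w : ~~ odd p -> Gv r p u v w = Ge r u v w.
Proof. by rewrite /Gv => /negbTE ->. Qed.

Lemma Gv_pos r p u v w : Gv r p u v w -> 0 < u.
Proof.
rewrite /Gv; case: (odd p).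
  by case/orP => [H|/andP[H _]]; lia.
case/orP => /hasP [x]; rewrite mem_iota => Hx.
  by case/andP => H _; lia.
by case/and3P => H _ _; lia.
Qed.

Lemma inLP r k N e : reflect (exists p, [/\ k <= p, p < N & Gv r p (e p) (e p.+1) (e p.+2)]) (inL r k N e).
Proof.
rewrite inL_E; apply: (iffP hasP).
  by move=> [p]; rewrite mem_iota => Hp /andP[H1 H2]; exists p; split => //; lia.
by move=> [p [H1 H2 H3]]; exists p; rewrite ?mem_iota ?H1 //; lia.
Qed.

Lemma inL_peel r k N e : k < N -> inL r k N e = Gv r k (e k) (e k.+1) (e k.+2) || inL r k.+1 N e.
Proof.
move=> HkN; apply/inLP/orP.
  move=> [p [H1 H2 H3]]; case: (eqVneq p k) => [Epk|Npk].
    by left; rewrite -Epk.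
  by right; apply/inLP; exists p; split => //; lia.
case=> [H|/inLP [p [H1 H2 H3]]]; first by exists k.
by exists p; split => //; lia.
Qed.

Lemma inL_bound r k N B e : (forall p, B <= p -> e p = 0) -> B <= N -> inL r k N e = inL r k B e.
Proof.
move=> HB HBN; apply/inLP/inLP => [] [p [H1 H2 H3]]; exists p; split => //.
  case: (ltnP p B) => // HpB; move: (Gv_pos H3); rewrite HB //.
lia.
Qed.

Lemma inL_ext r k N e e' : (forall p, k <= p -> e p = e' p) -> inL r k N e = inL r k N e'.
Proof.
move=> He; apply/inLP/inLP => [] [p [H1 H2 H3]]; exists p; split => //.
  by rewrite -!He //; lia.
by rewrite !He //; lia.
Qed.

Lemma core_arith r l b y2 y3 y4 y5 (Z : bool) : 1 <= l <= r ->
  Ev r l b y2 y3 || (((2 <= y2) || ((1 <= y2) && (r - 1 <= y3))) || (Ge r y3 y4 y5 || Z))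
  = (l <= b) || ((2 <= y2) || (((1 <= y2) && (r - b - 1 <= y3)) || (Ev r (r - b) y3 y4 y5 || Z))).
Proof.
move=> /andP[Hl1 Hlr].
case: Z; first by rewrite !orbT.
rewrite !orbF.
case: (leqP l b) => Hlb; first by rewrite /Ev Hlb.
rewrite /Ev /Ge (leqNgt l b) Hlb /=.
apply/idP/idP.
- case/orP => [/orP [/hasP [t]|/hasP [t]]|/orP [/orP [H|/andP [H1 H2]]|/orP [/hasP [n1]|/hasP[n2]]]];
    rewrite ?mem_iota.
  + move=> Ht /andP [H1 H2]; apply/orP; right; apply/orP; right; apply/orP; left; lia.
  + move=> Ht /and3P [H1 H2 H3]; apply/orP; right; apply/orP; left; apply/andP; split => //; lia.
  + by rewrite H.
  + apply/orP; right; apply/orP; left; apply/andP; split => //; lia.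
  + move=> Hn /andP [H1 H2].
    case: (leqP n1 b) => Hnb.
      apply/orP; right; apply/orP; right; apply/orP; left; lia.
    apply/orP; right; apply/orP; right; apply/orP; right; apply/orP; left.
    apply/hasP; exists (n1 - b); rewrite ?mem_iota; first lia.
    apply/andP; split; lia.
  + move=> Hn /and3P [H1 H2 H3].
    case: (leqP n2.+1 b) => Hnb.
      apply/orP; right; apply/orP; right; apply/orP; left; lia.
    apply/orP; right; apply/orP; right; apply/orP; right; apply/orP; right.
    apply/hasP; exists (n2.+1 - b); rewrite ?mem_iota; first lia.
    apply/and3P; split => //; lia.
- case/orP => [H|/orP [/andP [H1 H2]|/orP [H|/orP [/hasP [t]|/hasP [t]]]]]; rewrite ?mem_iota.
  + by rewrite H !orbT.
  + case: (posnP b) => Hb.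
      apply/orP; right; apply/orP; left; apply/orP; right; apply/andP; split => //; lia.
    apply/orP; left; apply/orP; right.
    apply/hasP; exists (l - b); rewrite ?mem_iota; first lia.
    apply/and3P; split => //; lia.
  + case: (posnP b) => Hb.
      apply/orP; right; apply/orP; right; apply/orP; left.
      apply/hasP; exists 0; rewrite ?mem_iota; first lia.
      apply/andP; split => //; lia.
    apply/orP; left; apply/orP; left.
    apply/hasP; exists (l - b); rewrite ?mem_iota; first lia.
    apply/andP; split => //; lia.
  + move=> Ht /andP [H1 H2].
    apply/orP; right; apply/orP; right; apply/orP; left.
    apply/hasP; exists (b + t); rewrite ?mem_iota; first lia.
    apply/andP; split => //; lia.
  + move=> Ht /and3P [H1 H2 H3].
    apply/orP; right; apply/orP; right; apply/orP; right.
    apply/hasP; exists (b + t - 1); rewrite ?mem_iota; first lia.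
    apply/and3P; split => //; lia.
Qed.

Lemma core r l k N e : odd k -> k.+3 < N -> 1 <= l <= r ->
  inLl r l k N e = [|| 2 <= e k, (1 <= e k) && (l - 1 <= e k.+1), l <= e k.+1
                     | inLl r (r - e k.+1) k.+2 N e].
Proof.
move=> Hk HN Hl.
rewrite /inLl Hk /= Hk !extra_E.
rewrite (inL_peel _ _ (_ : k.+2 < N)); last lia.
rewrite (inL_peel _ _ (_ : k.+3 < N)) //.
rewrite Gv_odd /=; last by rewrite Hk.
rewrite Gv_even /=; last by rewrite Hk.
by rewrite core_arith.
Qed.

Definition ext S (e : {ffun 'I_S -> 'I_S}) : nat -> nat :=
  fun p => match insub p with Some i => nat_of_ord (e i) | None => 0%N end.

Lemma extexpE j e : extexp e = @ext j.+1 e.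
Proof. by []. Qed.

Lemma ext_val S (e : {ffun 'I_S -> 'I_S}) (i : 'I_S) : ext e i = e i.
Proof. by rewrite /ext valK. Qed.

Lemma ext_out S (e : {ffun 'I_S -> 'I_S}) p : S <= p -> ext e p = 0.
Proof. by move=> H; rewrite /ext insubF // ltnNge H. Qed.

Lemma ext_lt S (e : {ffun 'I_S.+1 -> 'I_S.+1}) p : ext e p < S.+1.
Proof.
case: (ltnP p S.+1) => H.
  by rewrite -[p]/(nat_of_ord (Ordinal H)) ext_val.
by rewrite ext_out.
Qed.

Lemma ext_inj S (e1 e2 : {ffun 'I_S -> 'I_S}) : ext e1 = ext e2 -> e1 = e2.
Proof.
move=> H; apply/ffunP => i; apply: val_inj.
have h1 := ext_val e1 i; have h2 := ext_val e2 i; rewrite H in h1.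
exact: etrans (esym h1) h2.
Qed.

Lemma card_bij (T1 T2 : finType) (A : {set T1}) (B : {set T2}) (f : T1 -> T2) (g : T2 -> T1) :
  {in A, forall x, f x \in B} -> {in B, forall y, g y \in A} ->
  {in A, cancel f g} -> {in B, cancel g f} -> #|A| = #|B|.
Proof.
move=> fAB gBA fK gK; apply/eqP; rewrite eqn_leq; apply/andP; split.
  rewrite -(card_in_imset (f := f)); last by move=> x y Hx Hy Hxy; rewrite -(fK x) // Hxy fK.
  by apply: subset_leq_card; apply/subsetP => y /imsetP [x Hx ->]; apply: fAB.
rewrite -(card_in_imset (f := g)); last by move=> x y Hx Hy Hxy; rewrite -(gK x) // Hxy gK.
by apply: subset_leq_card; apply/subsetP => y /imsetP [x Hx ->]; apply: gBA.
Qed.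

Definition conv S T (e : {ffun 'I_S -> 'I_S}) : {ffun 'I_T.+1 -> 'I_T.+1} :=
  [ffun i : 'I_T.+1 => inord (ext e i)].

Lemma ext_conv S T (e : {ffun 'I_S -> 'I_S}) :
  (forall p, T < p -> ext e p = 0) -> (forall p, ext e p <= T) -> ext (conv T e) = ext e.
Proof.
move=> H1 H2; apply: functional_extensionality => p.
case: (ltnP p T.+1) => Hp.
  by rewrite -[p]/(nat_of_ord (Ordinal Hp)) ext_val ffunE inordK // ltnS.
by rewrite ext_out // H1.
Qed.

Lemma box (M j : nat) (P : (nat -> nat) -> bool) : j <= M ->
  (forall f, (forall p, M.+1 <= p -> f p = 0) -> P f ->
       (forall p, j < p -> f p = 0) /\ (forall p, f p <= j)) ->
  #|[set e : {ffun 'I_M.+1 -> 'I_M.+1} | P (ext e)]| =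
  #|[set e : {ffun 'I_j.+1 -> 'I_j.+1} | P (ext e)]|.
Proof.
move=> HjM HP.
have HPe (e : {ffun 'I_M.+1 -> 'I_M.+1}) : P (ext e) ->
   (forall p, j < p -> ext e p = 0) /\ (forall p, ext e p <= j).
  by move=> He; apply: HP => // p Hp; rewrite ext_out.
have Hsm (e : {ffun 'I_j.+1 -> 'I_j.+1}) : ext (conv M e) = ext e.
  apply: ext_conv => p; last by have := ext_lt e p; lia.
  by move=> Hp; rewrite ext_out //; lia.
apply: (card_bij (f := conv j) (g := conv M)).
- move=> x; rewrite !inE => Hx; have [H1 H2] := HPe _ Hx.
  by rewrite ext_conv.
- by move=> y; rewrite !inE Hsm.
- move=> x; rewrite !inE => Hx; have [H1 H2] := HPe _ Hx.
  by apply: ext_inj; rewrite Hsm ext_conv.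
- move=> y; rewrite !inE => Hy; apply: ext_inj.
  have [H1 H2] : (forall p, j < p -> ext (conv M y) p = 0) /\ (forall p, ext (conv M y) p <= j).
    by apply: HPe; rewrite Hsm.
  by rewrite ext_conv // Hsm.
Qed.

Definition PfS S r l k j (f : nat -> nat) : bool :=
  [forall p : 'I_S, ((p == 0 :> nat) || (p < k)) ==> (f p == 0)]
  && (\sum_(p < S) p * f p == j) && ~~ inLl r l k S f.

Definition C S r l k j := #|[set e : {ffun 'I_S -> 'I_S} | PfS S r l k j (ext e)]|.

Lemma term_le S (F : nat -> nat) p : p < S -> F p <= \sum_(q < S) F q.
Proof. by move=> Hp; rewrite (bigD1 (Ordinal Hp)) //= leq_addr. Qed.

Lemma PfS_prop S r l k j f : 0 < S -> (forall p, S <= p -> f p = 0) -> PfS S r l k j f ->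
  (forall p, j < p -> f p = 0) /\ (forall p, f p <= j).
Proof.
move=> S0 Hout /andP [/andP [/forallP Hs /eqP Hw] _].
have H0 : f 0 = 0 by apply/eqP; have := Hs (Ordinal S0); rewrite /= ?eqxx.
have Hle p : p < S -> p * f p <= j.
  by move=> Hp; rewrite -Hw; apply: (term_le (fun q => q * f q)).
split => p.
  move=> Hjp; case: (ltnP p S) => Hp; last by rewrite Hout.
  have := Hle p Hp; case: (f p) => // n; nia.
case: (ltnP p S) => Hp; last by rewrite Hout.
case: p Hp => [|p] Hp; first by rewrite H0.
have := Hle _ Hp; nia.
Qed.

Lemma inLl_bound r l k N B e : (forall p, B <= p -> e p = 0) -> B <= N ->
  inLl r l k N e = inLl r l k B e.
Proof.
by move=> HB HBN; rewrite /inLl; case: (odd k); rewrite (inL_bound _ _ HB HBN).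
Qed.

Lemma hp_C M r l k j : j <= M -> hpcoef r l k j = C M.+1 r l k j.
Proof.
move=> HjM; rewrite /C (box (j := j)) //; last first.
  by move=> f Hf HP; apply: (PfS_prop (S := M.+1)) HP.
rewrite /hpcoef; apply: eq_card => e; rewrite !inE.
rewrite extexpE /monoS /PfS -[(0%R : nat)]/0%N -andbA.
have E1 : [forall p : 'I_j.+1, (p == 0 :> nat) || (p < k) ==> (e p == 0 :> nat)] =
          [forall p : 'I_M.+1, (p == 0 :> nat) || (p < k) ==> (ext e p == 0)].
  apply/forallP/forallP => H p.
    case: (ltnP p j.+1) => Hp.
      by have := H (Ordinal Hp); rewrite /= -(ext_val e (Ordinal Hp)).
    by rewrite ext_out ?implybT.
  have Hp : p < M.+1 by have := ltn_ord p; lia.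
  by have := H (Ordinal Hp); rewrite /= ext_val.
have E2 : \sum_(p < j.+1) p * e p = \sum_(p < M.+1) p * ext e p.
  rewrite (eq_bigr (fun p : 'I_j.+1 => p * ext e p)); last by move=> p _; rewrite ext_val.
  rewrite [LHS](big_ord_widen M.+1 (fun p => p * ext e p)) // big_mkcond /=.
  apply: eq_bigr => p _; case: ifP => // /negbT; rewrite -leqNgt => Hp.
  by rewrite ext_out ?muln0.
rewrite E1 E2 andbA.
by rewrite (inLl_bound _ _ _ (ext_out e) (_ : j.+1 <= M.+1)).
Qed.

Definition upd k a b (f : nat -> nat) : nat -> nat :=
  fun p => if p == k then a else if p == k.+1 then b else f p.

Definition setb M (e : {ffun 'I_M.+1 -> 'I_M.+1}) k a b : {ffun 'I_M.+1 -> 'I_M.+1} :=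
  [ffun i : 'I_M.+1 => if (i : nat) == k then inord a else if (i : nat) == k.+1 then inord b else e i].

Lemma ext_setb M (e : {ffun 'I_M.+1 -> 'I_M.+1}) k a b : k.+1 <= M -> a <= M -> b <= M ->
  ext (setb e k a b) = upd k a b (ext e).
Proof.
move=> Hk Ha Hb; apply: functional_extensionality => p; rewrite /upd.
case: (ltnP p M.+1) => Hp.
  rewrite -[p]/(nat_of_ord (Ordinal Hp)) !ext_val ffunE /=.
  by case: eqP => _; [rewrite inordK|case: eqP => _; rewrite ?inordK].
rewrite !ext_out //; case: eqP => [E|_]; first lia.
by case: eqP => [E|_] //; lia.
Qed.

Lemma upd_upd k a b a' b' f : upd k a b (upd k a' b' f) = upd k a b f.
Proof.
by apply: functional_extensionality => p; rewrite /upd; case: eqP => //; case: eqP.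
Qed.

Lemma upd_id k a b f : f k = a -> f k.+1 = b -> upd k a b f = f.
Proof.
move=> Ha Hb; apply: functional_extensionality => p; rewrite /upd.
by case: eqP => [->|_] //; case: eqP => [->|_].
Qed.

Lemma sum_ind S k c : k < S -> \sum_(p < S) (nat_of_ord p == k) * c = c.
Proof.
move=> Hk; rewrite (bigD1 (Ordinal Hk)) //= eqxx mul1n big1 ?addn0 // => p Hp.
rewrite (_ : (p == k :> nat) = false) //; apply/negbTE.
by apply: contra Hp => /eqP H; apply/eqP/val_inj.
Qed.

Lemma weight S k (f : nat -> nat) : k.+1 < S ->
  \sum_(p < S) p * f p = \sum_(p < S) p * upd k 0 0 f p + k * f k + k.+1 * f k.+1.
Proof.
move=> Hk.
rewrite -(sum_ind (k * f k) (_ : k < S)); last lia.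
rewrite -(sum_ind (k.+1 * f k.+1) Hk) -!big_split /=.
apply: eq_bigr => p _; rewrite /upd.
case: eqP => [->|Hpk]; first by rewrite (_ : (k == k.+1) = false) /= ?muln0 ?addn0 ?add0n ?mul1n ?mul0n //; lia.
by case: eqP => [->|_] /=; rewrite ?muln0 ?add0n ?addn0 ?mul1n ?mul0n ?addn0.
Qed.

Lemma inLl_ext r l k N e e' : (forall p, k <= p -> e p = e' p) -> inLl r l k N e = inLl r l k N e'.
Proof.
move=> He; rewrite /inLl !extra_E.
case: (odd k).
  rewrite (He k) // (He k.+1) // (He k.+2); last lia.
  rewrite (He k.+3); last lia.
  by rewrite (inL_ext _ _ (e' := e')) // => p Hp; apply: He; lia.
rewrite (He k) // (He k.+1) // (He k.+2); last lia.
by rewrite (inL_ext _ _ (e' := e')) // => p Hp; apply: He; lia.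
Qed.

Definition Fib M r l k n a b :=
  [set e : {ffun 'I_M.+1 -> 'I_M.+1} | PfS M.+1 r l k n (ext e) && (ext e k == a) && (ext e k.+1 == b)].

Lemma fiber M r l k n a b : odd k -> 1 <= l <= r -> n + k + r + 5 <= M -> a < 2 -> b < l ->
  #|Fib M r l k n a b| =
  if (a == 1) && (l <= b.+1) then 0
  else if k * a + k.+1 * b <= n then C M.+1 r (r - b) k.+2 (n - (k * a + k.+1 * b)) else 0.
Proof.
move=> Hk Hl HM Ha Hb.
have HcM : k.+3 < M.+1 by lia.
have Hcore f := core (N := M.+1) f Hk HcM Hl.
case: ifP => Hbad.
  apply/eqP; rewrite cards_eq0; apply/eqP/setP => x; rewrite !inE.
  apply/negbTE; apply/negP => /andP [/andP [HP /eqP Hxa] /eqP Hxb]; move: HP.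
  rewrite /PfS Hcore Hxa Hxb; move/andP: Hbad => [/eqP Ea Hlb]; subst a.
  by rewrite (_ : l - 1 <= b) ?orbT ?andbF //; lia.
case: ifP => Hw; last first.
  apply/eqP; rewrite cards_eq0; apply/eqP/setP => x; rewrite !inE.
  apply/negbTE; apply/negP => /andP [/andP [/andP [/andP [_ /eqP HP] _] /eqP Hxa] /eqP Hxb].
  move: HP; rewrite (weight _ (_ : k.+1 < M.+1)); last lia.
  by rewrite Hxa Hxb => Hn; move: Hw; rewrite -Hn; lia.
rewrite /C.
have HkM : k.+1 <= M by lia.
have HaM : a <= M by lia.
have HbM : b <= M by lia.
have H0M : 0 <= M by [].
apply: (card_bij (f := fun e => setb e k 0 0) (g := fun e => setb e k a b)).
- move=> x; rewrite !inE => /andP [/andP [HP /eqP Hxa] /eqP Hxb].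
  rewrite ext_setb //.
  move: HP; rewrite /PfS => /andP [/andP [/forallP Hs /eqP Hwt] HL].
  apply/andP; split; first (apply/andP; split).
  + apply/forallP => p; apply/implyP => Hp; rewrite /upd.
    case: ifP => // Hp0; case: ifP => // Hp1.
    have := Hs p; rewrite (_ : (nat_of_ord p == 0) || (p < k)) //.
    move: Hp => /orP [->|H] //; apply/orP; right.
    move/negbT: Hp0; move/negbT: Hp1; lia.
  + apply/eqP; move: Hwt; rewrite (weight (ext x) (_ : k.+1 < M.+1)) //; last lia.
  + rewrite (inLl_ext _ _ _ (e' := ext x)); last first.
      by move=> p Hp; rewrite /upd; case: eqP => [E|_]; [lia|case: eqP => [E|_] //; lia].
    by move: HL; rewrite Hcore Hxb !negb_or => /and4P [].
- move=> y; rewrite !inE /PfS => /andP [/andP [/forallP Hs /eqP Hwt] HL].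
  have Hy0 p : p < k.+2 -> ext y p = 0.
    move=> Hp; case: (ltnP p M.+1) => HpM; last by rewrite ext_out.
    by have := Hs (Ordinal HpM); rewrite /= Hp orbT => /eqP.
  rewrite ext_setb //.
  have Uk : upd k a b (ext y) k = a by rewrite /upd eqxx.
  have Uk1 : upd k a b (ext y) k.+1 = b by rewrite /upd (_ : (k.+1 == k) = false) ?eqxx //; lia.
  rewrite Uk Uk1 !eqxx !andbT.
  apply/andP; split; first (apply/andP; split).
  + apply/forallP => p; apply/implyP => Hp; rewrite /upd.
    case: ifP => [/eqP E|_]; first by move: Hp; rewrite E; case/orP; lia.
    case: ifP => [/eqP E|_]; first by move: Hp; rewrite E; case/orP; lia.
    by rewrite Hy0 //; move: Hp => /orP [/eqP ->|H] //; lia.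
  + rewrite (weight (upd k a b (ext y)) (_ : k.+1 < M.+1)); last lia.
    rewrite upd_upd upd_id ?Hy0 // Uk Uk1 Hwt; apply/eqP; lia.
  + rewrite Hcore Uk Uk1.
    rewrite (inLl_ext _ _ _ (e' := ext y)); last first.
      by move=> p Hp; rewrite /upd; case: ifP => [/eqP E|_]; [lia|case: ifP => [/eqP E|_] //; lia].
    rewrite (negbTE HL) orbF.
    move/negbT: Hbad; rewrite negb_and => Hbad.
    apply/negP => /or3P [H|/andP [H1 H2]|H]; try lia.
- move=> x; rewrite !inE => /andP [/andP [HP /eqP Hxa] /eqP Hxb].
  by apply: ext_inj; rewrite !ext_setb // upd_upd upd_id.
- move=> y; rewrite !inE /PfS => /andP [/andP [/forallP Hs /eqP Hwt] HL].
  have Hy0 p : p < k.+2 -> ext y p = 0.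
    move=> Hp; case: (ltnP p M.+1) => HpM; last by rewrite ext_out.
    by have := Hs (Ordinal HpM); rewrite /= Hp orbT => /eqP.
  by apply: ext_inj; rewrite !ext_setb // upd_upd upd_id // Hy0.
Qed.

Lemma sum_eqn (x n : nat) : \sum_(a < n) (x == a :> nat) = (x < n).
Proof.
elim: n => [|n IH]; first by rewrite big_ord0.
rewrite big_ord_recr /= IH.
case: (ltngtP x n) => [H|H|->].
- by rewrite ltnS ltnW.
- by rewrite ltnS leqNgt H.
- by rewrite ltnSn.
Qed.

Lemma decomp M r l k n : odd k -> 1 <= l <= r -> n + k + r + 5 <= M ->
  C M.+1 r l k n = \sum_(a < 2) \sum_(b < l) #|Fib M r l k n a b|.
Proof.
move=> Hk Hl HM; rewrite /C.
have HcM : k.+3 < M.+1 by lia.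
set A := [set e : {ffun 'I_M.+1 -> 'I_M.+1} | PfS M.+1 r l k n (ext e)].
rewrite -sum1_card.
have E1 : \sum_(x in A) 1 = \sum_(x in A) \sum_(a < 2) \sum_(b < l)
     ((ext x k == a :> nat) * (ext x k.+1 == b :> nat)).
  apply: eq_bigr => x.
  rewrite inE /PfS (core _ Hk HcM Hl) => /andP [_].
  rewrite !negb_or => /and4P [H1 H2 H3 _].
  have E2 : \sum_(a < 2) \sum_(b < l) ((ext x k == a :> nat) * (ext x k.+1 == b :> nat))
          = \sum_(a < 2) ((ext x k == a :> nat) * \sum_(b < l) (ext x k.+1 == b :> nat)).
    by apply: eq_bigr => a _; rewrite big_distrr.
  rewrite E2 -big_distrl /= !sum_eqn.
  by rewrite [ext x k < 2]ltnNge H1 [ext x k.+1 < l]ltnNge H3.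
rewrite E1 exchange_big; apply: eq_bigr => a _.
rewrite exchange_big; apply: eq_bigr => b _.
have E3 : \sum_(x in A) ((ext x k == a :> nat) * (ext x k.+1 == b :> nat)) =
          \sum_(x in A) (if (ext x k == a :> nat) && (ext x k.+1 == b :> nat) then 1 else 0).
  by apply: eq_bigr => x _; case: (ext x k == a :> nat); case: (ext x k.+1 == b :> nat).
rewrite E3 -big_mkcondr sum1dep_card.
by apply: eq_card => x; rewrite !inE -andbA.
Qed.

Lemma hp_rec r l k n : odd k -> 1 <= l <= r ->
  hpcoef r l k n =
  \sum_(a < 2) \sum_(b < l)
     (if (a == 1 :> nat) && (l <= b.+1) then 0
      else if k * a + k.+1 * b <= n then hpcoef r (r - b) k.+2 (n - (k * a + k.+1 * b)) else 0).
Proof.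
move=> Hk Hl.
rewrite (hp_C (M := n + k + r + 5)); last lia.
rewrite (@decomp (n + k + r + 5) r l k n Hk Hl (leqnn _)).
apply: eq_bigr => a _; apply: eq_bigr => b _.
rewrite fiber //.
case: ifP => //; case: ifP => // Hw _.
by rewrite (hp_C (M := n + k + r + 5)) //; lia.
Qed.

Local Open Scope ring_scope.

Definition sh (R : nzRingType) (e : nat) (g : nat -> R) : nat -> R :=
  fun n => if (e <= n)%N then g (n - e)%N else 0.

Section SH.
Variable R : comNzRingType.

Lemma sum_nat_zero (m n : nat) (F : nat -> R) :
  (forall i, (m <= i < n)%N -> F i = 0) -> \sum_(m <= i < n) F i = 0.
Proof. by move=> H; rewrite big_nat_cond big1 // => i /andP [Hi _]; apply: H. Qed.

Lemma smul_qpow e (g : nat -> R) n : smul (qpow R e) g n = sh e g n.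
Proof.
rewrite /smul /sh /qpow -(big_mkord xpredT (fun a => (a == e)%:R * g (n - a)%N)).
case: leqP => He.
  rewrite (big_cat_nat (n := e)) //=; last lia.
  rewrite sum_nat_zero ?add0r; last by move=> i Hi; rewrite (_ : (i == e) = false) ?mul0r //; lia.
  rewrite big_ltn; last lia.
  rewrite eqxx mul1r sum_nat_zero ?addr0 // => i Hi.
  by rewrite (_ : (i == e) = false) ?mul0r //; lia.
rewrite sum_nat_zero // => i Hi.
by rewrite (_ : (i == e) = false) ?mul0r //; lia.
Qed.

Lemma smulC (f g : nat -> R) n : smul f g n = smul g f n.
Proof.
rewrite /smul (reindex_inj rev_ord_inj) /=.
apply: eq_bigr => a _; rewrite mulrC; congr (g _ * f _); rewrite /= subSS ?subKn //.
by rewrite -ltnS.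
Qed.

Lemma smul_shr (f g : nat -> R) e n : smul f (sh e g) n = sh e (smul f g) n.
Proof.
rewrite /smul /sh.
rewrite -(big_mkord xpredT (fun a => f a * (if (e <= n - a)%N then g (n - a - e)%N else 0))).
case: leqP => He.
  rewrite -(big_mkord xpredT (fun a => f a * g (n - e - a)%N)).
  rewrite (big_cat_nat (n := (n - e).+1)) //=; last lia.
  rewrite [X in _ + X]sum_nat_zero ?addr0; last first.
    by move=> i Hi; rewrite (_ : (e <= n - i)%N = false) ?mulr0 //; lia.
  apply: eq_big_nat => i Hi.
  have -> : (e <= n - i)%N by lia.
  have -> : (n - i - e = n - e - i)%N by lia.
  by [].
rewrite sum_nat_zero // => i Hi.
by rewrite (_ : (e <= n - i)%N = false) ?mulr0 //; lia.
Qed.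

Lemma smul_shl (f g : nat -> R) e n : smul (sh e f) g n = sh e (smul f g) n.
Proof.
rewrite smulC smul_shr /sh; case: leqP => // _; exact: smulC.
Qed.

Lemma smul_sumr (I : Type) (s : seq I) (P : pred I) (f : nat -> R) (G : I -> nat -> R) n :
  smul f (fun m => \sum_(i <- s | P i) G i m) n = \sum_(i <- s | P i) smul f (G i) n.
Proof.
rewrite /smul; under eq_bigr => a _ do rewrite mulr_sumr.
by rewrite exchange_big.
Qed.

Lemma smul_suml (I : Type) (s : seq I) (P : pred I) (g : nat -> R) (G : I -> nat -> R) n :
  smul (fun m => \sum_(i <- s | P i) G i m) g n = \sum_(i <- s | P i) smul (G i) g n.
Proof.
rewrite smulC smul_sumr; apply: eq_bigr => i _; exact: smulC.
Qed.

Lemma smul_addl (f1 f2 g : nat -> R) n : smul (sadd f1 f2) g n = smul f1 g n + smul f2 g n.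
Proof. by rewrite /smul /sadd -big_split; apply: eq_bigr => a _; rewrite mulrDl. Qed.

Lemma smul0l (g : nat -> R) n : smul (szero R) g n = 0.
Proof. by rewrite /smul big1 // => a _; rewrite /szero mul0r. Qed.

Lemma sh_sum (I : Type) (s : seq I) (P : pred I) (G : I -> nat -> R) e n :
  sh e (fun m => \sum_(i <- s | P i) G i m) n = \sum_(i <- s | P i) sh e (G i) n.
Proof. by rewrite /sh; case: leqP => // _; rewrite big1. Qed.

End SH.

Local Open Scope ring_scope.

Section SI.
Variable R : comNzRingType.

Lemma HP_rec r k l n : odd k -> (1 <= l <= r)%N ->
  HP R r k l n = \sum_(b < l) sh (k.+1 * b) (HP R r k.+2 (r - b)) n
               + \sum_(b < l.-1) sh (k + k.+1 * b) (HP R r k.+2 (r - b)) n.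
Proof.
move=> Hk Hl.
rewrite /HP hp_rec // natr_sum big_ord_recl big_ord1 /= !natr_sum.
congr (_ + _).
  apply: eq_bigr => b _; rewrite muln0 add0n /sh.
  by case: ifP => _; rewrite ?natr0.
case: l Hl => [|l] Hl //=.
rewrite big_ord_recr /= leqnn /= addr0.
apply: eq_bigr => b _; rewrite muln1 /sh.
rewrite (_ : (l.+1 <= (widen_ord (leqnSn l) b).+1)%N = false) /=; last by have := ltn_ord b; lia.
by case: ifP => _; rewrite ?natr0.
Qed.

Lemma rect (lo hi N : nat) (F : nat -> R) : (lo <= hi <= N)%N ->
  \sum_(lo <= i < hi) F i = \sum_(0 <= i < N) (if (lo <= i < hi)%N then F i else 0).
Proof.
move=> /andP [H1 H2].
rewrite [RHS](big_cat_nat (n := lo)) //=; last lia.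
rewrite [X in _ = X + _]sum_nat_zero ?add0r; last by move=> i Hi; rewrite ifF //; lia.
rewrite [RHS](big_cat_nat (n := hi)) //=.
rewrite [X in _ + X]sum_nat_zero ?addr0; last by move=> i Hi; rewrite ifF //; lia.
by apply: eq_big_nat => i Hi; rewrite ifT.
Qed.

Lemma tri (Z : nat -> nat -> R) r (hb hj : nat -> nat) :
  (forall j, (1 <= j <= r)%N -> (hb j <= r.+1)%N) ->
  (forall m, (1 <= m <= r)%N -> (1 <= hj m <= r.+1)%N) ->
  (forall j b, (1 <= j <= r)%N -> (b <= r)%N -> (b < hb j)%N = (b < r)%N && (j < hj b.+1)%N) ->
  \sum_(1 <= j < r.+1) \sum_(b < hb j) Z j b =
  \sum_(1 <= m < r.+1) \sum_(1 <= j < hj m) Z j (m - 1)%N.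
Proof.
move=> Hb Hj Hc.
rewrite [RHS]big_add1 /=.
have E1 : \sum_(1 <= j < r.+1) \sum_(b < hb j) Z j b =
    \sum_(0 <= j < r.+1) (if (1 <= j < r.+1)%N then \sum_(0 <= b < r.+1)
        (if (0 <= b < hb j)%N then Z j b else 0) else 0).
  rewrite [LHS](@rect 1 r.+1 r.+1); last lia.
  apply: eq_big_nat => j Hj1; case: ifP => // Hj2.
  by rewrite -(big_mkord xpredT (Z j)) (@rect 0 (hb j) r.+1) //; apply/andP; split => //; apply: Hb; lia.
have E2 : \sum_(0 <= m < r) \sum_(1 <= j < hj m.+1) Z j (m.+1 - 1)%N =
    \sum_(0 <= m < r.+1) (if (0 <= m < r)%N then \sum_(0 <= j < r.+1)
        (if (1 <= j < hj m.+1)%N then Z j m else 0) else 0).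
  rewrite [LHS](@rect 0 r r.+1); last lia.
  apply: eq_big_nat => m Hm1; case: ifP => // Hm2.
  rewrite subn1 /= (@rect 1 (hj m.+1) r.+1) //; apply: Hj; lia.
rewrite E1 E2.
rewrite (eq_big_nat _ _ (F2 := fun j => \sum_(0 <= b < r.+1)
   (if (1 <= j)%N && (b < hb j)%N then Z j b else 0))); last first.
  move=> j Hj1; case: ifP => Hj2; last by rewrite sum_nat_zero // => b _; rewrite ifF //; lia.
  by apply: eq_big_nat => b Hb1 /=; rewrite (_ : (1 <= j)%N) //; lia.
rewrite [RHS](eq_big_nat _ _ (F2 := fun m => \sum_(0 <= j < r.+1)
   (if (m < r)%N && (1 <= j < hj m.+1)%N then Z j m else 0))); last first.
  move=> m Hm1; case: ifP => Hm2; last by rewrite sum_nat_zero // => b _; rewrite ifF //; lia.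
  have -> : (m < r)%N by lia.
  by [].
rewrite [RHS]exchange_big.
apply: eq_big_nat => j Hj1; apply: eq_big_nat => b Hb1.
case: (posnP j) => [->|Hj0] //=; first by rewrite andbF.
by rewrite Hc //; lia.
Qed.

End SI.

Local Open Scope ring_scope.

Section SJ.
Variable R : comNzRingType.

Lemma smul_addr (f g1 g2 : nat -> R) n :
  smul f (fun m => g1 m + g2 m) n = smul f g1 n + smul f g2 n.
Proof. by rewrite /smul -big_split; apply: eq_bigr => a _; rewrite mulrDr. Qed.

Lemma smul_qpowF e (g : nat -> R) : smul (qpow R e) g = sh e g.
Proof. by apply: functional_extensionality => n; rewrite smul_qpow. Qed.

Lemma sh_smul_suml (I : Type) (s : seq I) (P : pred I) (G : I -> nat -> R) (g : nat -> R) e n :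
  sh e (smul (fun m => \sum_(i <- s | P i) G i m) g) n = \sum_(i <- s | P i) sh e (smul (G i) g) n.
Proof. by rewrite /sh; case: leqP => _; [rewrite smul_suml|rewrite big1]. Qed.

Lemma sum_mkord n (F : nat -> R) : \sum_(i < n) F i = \sum_(0 <= i < n) F i.
Proof. by rewrite big_mkord. Qed.

Lemma odd21 x : odd (2 * x + 1).
Proof. by rewrite oddD oddM. Qed.

Lemma main_s J r i : (2 <= r)%N -> (1 <= i)%N -> (i <= r)%N -> forall s n,
  HP R r (2 * J + 1) i n =
  \sum_(1 <= j < r.+1) smul (Nser R r i J s j) (HP R r (2 * (J.+1 + s) + 1) (r - j + 1)) n.
Proof.
move=> hr hi1 hir; elim=> [|s IH] n.
  rewrite HP_rec ?odd21; last by apply/andP.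
  rewrite -(big_mkord xpredT (fun b => sh ((2 * J + 1).+1 * b) (HP R r (2 * J + 1).+2 (r - b)) n)).
  rewrite -(big_mkord xpredT (fun b => sh (2 * J + 1 + (2 * J + 1).+1 * b) (HP R r (2 * J + 1).+2 (r - b)) n)).
  rewrite (@rect _ 0 i r) ?(@rect _ 0 i.-1 r); try lia.
  rewrite -big_split /= [RHS]big_add1 /=.
  apply: eq_big_nat => b Hb.
  rewrite (_ : (2 * (J.+1 + 0) + 1 = (2 * J + 1).+2)%N); last lia.
  rewrite (_ : (r - b.+1 + 1 = r - b)%N); last lia.
  case: (ltngtP b.+1 i) => H.
  - rewrite smul_addl !smul_qpow ifT; last lia.
    rewrite addrC; congr (sh _ _ _ + sh _ _ _); nia.
  - by rewrite smul0l add0r ifF //; lia.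
  - rewrite smul_qpow ifF ?addr0; last lia.
    congr (sh _ _ _); nia.
  done.
rewrite IH.
set d := (J.+1 + s)%N.
have Hd : (2 * (J.+1 + s.+1) + 1 = (2 * d + 1).+2)%N by rewrite /d; lia.
rewrite Hd.
have EL : forall j, (1 <= j < r.+1)%N ->
   smul (Nser R r i J s j) (HP R r (2 * d + 1) (r - j + 1)) n =
   \sum_(b < r - j + 1) sh ((2 * d + 1).+1 * b) (smul (Nser R r i J s j) (HP R r (2 * d + 1).+2 (r - b))) n
   + \sum_(b < (r - j + 1).-1) sh (2 * d + 1 + (2 * d + 1).+1 * b) (smul (Nser R r i J s j) (HP R r (2 * d + 1).+2 (r - b))) n.
  move=> j Hj.
  have -> : HP R r (2 * d + 1) (r - j + 1) = fun m =>
     \sum_(b < r - j + 1) sh ((2 * d + 1).+1 * b) (HP R r (2 * d + 1).+2 (r - b)) m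
   + \sum_(b < (r - j + 1).-1) sh (2 * d + 1 + (2 * d + 1).+1 * b) (HP R r (2 * d + 1).+2 (r - b)) m.
    apply: functional_extensionality => m; rewrite HP_rec ?odd21 //; lia.
  rewrite smul_addr !smul_sumr.
  by congr (_ + _); apply: eq_bigr => b _; rewrite smul_shr.
rewrite (eq_big_nat _ _ EL) big_split /=.
have ER : forall m, (1 <= m < r.+1)%N ->
   smul (Nser R r i J s.+1 m) (HP R r (2 * d + 1).+2 (r - m + 1)) n =
   \sum_(1 <= j < (r - m + 1).+1) sh ((2 * d + 1).+1 * (m - 1)) (smul (Nser R r i J s j) (HP R r (2 * d + 1).+2 (r - (m - 1)))) n
   + \sum_(1 <= j < (r - m).+1) sh (2 * d + 1 + (2 * d + 1).+1 * (m - 1)) (smul (Nser R r i J s j) (HP R r (2 * d + 1).+2 (r - (m - 1)))) n.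
  move=> m Hm.
  rewrite [Nser _ _ _ _ s.+1 _]/= -/d smul_addl !smul_qpowF !smul_shl !sh_smul_suml.
  rewrite (_ : (r - (m - 1) = r - m + 1)%N); last lia.
  congr (_ + _); apply: eq_big_nat => j Hj; congr (sh _ _ _); nia.
rewrite [RHS](eq_big_nat _ _ ER) big_split /=.
congr (_ + _).
  pose Z1 := fun j b : nat => sh ((2 * d + 1).+1 * b) (smul (Nser R r i J s j) (HP R r (2 * d + 1).+2 (r - b))) n.
  have T := @tri _ Z1 r (fun j => r - j + 1)%N (fun m => (r - m + 1).+1)%N.
  apply: T.
  - by move=> j Hj; lia.
  - by move=> m Hm; lia.
  - by move=> j b Hj Hb; apply/idP/idP => H; [apply/andP; split|move/andP: H => [H1 H2]]; lia.
pose Z2 := fun j b : nat => sh (2 * d + 1 + (2 * d + 1).+1 * b) (smul (Nser R r i J s j) (HP R r (2 * d + 1).+2 (r - b))) n.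
have T := @tri _ Z2 r (fun j => (r - j + 1).-1)%N (fun m => (r - m).+1)%N.
apply: T.
- by move=> j Hj; lia.
- by move=> m Hm; lia.
- by move=> j b Hj Hb; apply/idP/idP => H; [apply/andP; split|move/andP: H => [H1 H2]]; lia.
Qed.

End SJ.


Unset Implicit Arguments.

Theorem lemma2p2 (F : fieldType) (charF0 : [pchar F] =i pred0)
  (J r i : nat) (hr : (2 <= r)%N) (hi1 : (1 <= i)%N) (hir : (i <= r)%N)
  (d : nat) (hd : (J.+1 <= d)%N) :
  forall n : nat,
    HP F r (2 * J + 1) i n =
    \sum_(1 <= j < r.+1) smul (NJ F r i J d j) (HP F r (2 * d + 1) (r - j + 1)) n.
Proof.
move=> n; rewrite /NJ.
have := @main_s F J r i hr hi1 hir (d - J.+1) n.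
by rewrite (subnKC hd).
Qed.
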